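(* Let $s\geq 2$ be an integer and let $T$ be a tree with $n$ vertices in which every vertex has degree at most $s$. Let $\mathcal{W}$ denote the Wiener index of $T$, and let $\mathcal{V}_{1,s}$ be the tree obtained from $T$ by one application of the Vicsek fractal operation $V_s$. Then the Wiener index of $\mathcal{V}_{1,s}$ is $$\mathcal{W}_{\mathcal{V}_{1,s}}=3(s+1)^{2}\mathcal{W}+(s^{2}-s-2)n^{2}+(s+2)n.$$
   Context: All graphs are simple and connected. The distance $d_{uv}$ between vertices $u,v$ is the number of edges of a shortest path joining them. The Wiener index of a graph $G=(V,E)$ is $\mathcal{W}=\sum_{\{u,v\},\,u\neq v} d_{uv}=\frac12\sum_{u\in V}\sum_{v\in V}d_{uv}$ (sum over unordered pairs of distinct vertices). The Vicsek fractal operation $V_s$ applied to a tree $T$ whose maximum degree is at most $s$ produces a new tree as follows: first, every edge $uv$ of $T$ is replaced by a path $u-a-b-v$ of length $3$ through two new vertices $a,b$ (distinct for each edge); then, to every original vertex $v$ of $T$, having degree $k_v$ in $T$, one attaches $s-k_v$ new pendant vertices (leaves), so that every original vertex has degree exactly $s$. The inserted vertices $a,b$ receive no further pendant vertices. *)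

(* Defs.v *)
From mathcomp Require Import all_boot.
Set Implicit Arguments. Unset Strict Implicit. Unset Printing Implicit Defensive.

Section Graphs.
Variables (V : finType) (e : rel V).

Definition simple_graph := symmetric e /\ irreflexive e.

Definition connected_graph := forall u v : V, connect e u v.

Definition acyclic := forall p : seq V, ucycle e p -> size p < 3.

Definition is_tree := [/\ simple_graph, connected_graph & acyclic].

Definition deg (v : V) : nat := #|[set w | e v w]|.

Definition walk_of_len (k : nat) (u v : V) : bool :=
  [exists p : k.-tuple V, path e u p && (last u p == v)].

(* distance = least k admitting a walk of length k (a shortest walk is a
   shortest path; in a connected graph it has length < #|V|) *)
Definition dist (u v : V) : nat :=
  find (fun k => walk_of_len k u v) (iota 0 #|V|).

(* Wiener index: sum over unordered pairs = half of the ordered double sum *)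
Definition wiener : nat := (\sum_(u : V) \sum_(v : V) dist u v) %/ 2.

End Graphs.

(* Vertices of V_s(T): original vertices, two subdivision vertices per edge
   (the vertex of the edge uv adjacent to u is indexed by the ordered pair
   (u,v)), and for each original vertex u the pendant leaves (u,i) with
   deg u <= i < s, i.e. s - deg u leaves. *)
Definition vicsek_vertex (T : finType) (e : rel T) (s : nat) : finType :=
  (T + ({p : T * T | e p.1 p.2} + {q : T * 'I_s | deg e q.1 <= q.2}))%type.

Definition vicsek_rel (T : finType) (e : rel T) (s : nat) :
    rel (vicsek_vertex e s) :=
  fun x y =>
  match x, y with
  | inl u, inr (inl p) => u == (val p).1
  | inr (inl p), inl u => u == (val p).1
  | inr (inl p), inr (inl q) => (val q == ((val p).2, (val p).1))
  | inl u, inr (inr q) => u == (val q).1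
  | inr (inr q), inl u => u == (val q).1
  | _, _ => false
  end.

Arguments vicsek_vertex {T} e s.
Arguments vicsek_rel {T} e s _ _.

(* Main.v *)
Require Import Defs.
From mathcomp Require Import all_boot.
From mathcomp Require Import zify.
Set Implicit Arguments. Unset Strict Implicit. Unset Printing Implicit Defensive.


Section Gen.
Variables (V : finType) (e : rel V).

Lemma walkP k u v : reflect (exists p : seq V, [/\ size p = k, path e u p & last u p = v])
  (walk_of_len e k u v).
Proof.
apply: (iffP existsP) => [[p /andP[Hp /eqP Hl]] | [p [Hs Hp Hl]]].
  by exists (val p); rewrite size_tuple.
have Hs' : size p == k by rewrite Hs.
by exists (Tuple Hs'); rewrite /= Hp Hl eqxx.
Qed.

Lemma dist_le k u v : walk_of_len e k u v -> dist e u v <= k.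
Proof.
move=> H; rewrite /dist.
case: (ltnP k #|V|) => Hk.
  rewrite leqNgt; apply/negP => Hlt.
  have := before_find 0 Hlt; rewrite nth_iota // add0n H //.
apply: leq_trans (find_size _ _) _; by rewrite size_iota.
Qed.

Lemma dist_walk k u v : walk_of_len e k u v -> walk_of_len e (dist e u v) u v.
Proof.
case/walkP=> p [_ Hp Hl].
case: (shortenP Hp) Hl => p' Hp' Hu _ Hl.
have Hs : size p' < #|V|.
  move/card_uniqP: Hu => /= Hc.
  have := max_card (mem (u :: p')); rewrite Hc /=; done.
have Hw : walk_of_len e (size p') u v by apply/walkP; exists p'.
have Hh : has (fun k => walk_of_len e k u v) (iota 0 #|V|).
  by apply/hasP; exists (size p'); rewrite ?mem_iota.
have := nth_find 0 Hh; rewrite has_find size_iota in Hh.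
by rewrite /dist nth_iota // add0n.
Qed.

Definition good (u : V) (g : V -> nat) :=
  [/\ forall v, (g v == 0) = (v == u),
      forall x y, e x y -> g y <= g x + 1 &
      forall v, 0 < g v -> exists2 w, e w v & g w + 1 = g v].

Lemma good_walk u g : good u g -> forall v, walk_of_len e (g v) u v.
Proof.
case=> H0 _ Hp v; move Hk: (g v) => k; elim: k v Hk => [|k IH] v Hk.
  move/eqP: Hk; rewrite H0 => /eqP->; apply/walkP; by exists [::].
have Hv : 0 < g v by rewrite Hk.
have [w Hw Hgw] := Hp v Hv.
have Hw' : g w = k by lia.
have /walkP[p [Hs Hpa Hl]] := IH w Hw'.
apply/walkP; exists (rcons p v); rewrite size_rcons Hs rcons_path Hpa Hl Hw last_rcons.
by split.
Qed.

Lemma good_lower u g : good u g -> forall k v, walk_of_len e k u v -> g v <= k.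
Proof.
case=> H0 Hl _ k v /walkP[p [<- Hp <-]].
have Hu : g u = 0 by apply/eqP; rewrite H0.
suff : forall q x, path e x q -> g (last x q) <= g x + size q by move/(_ p u Hp); rewrite Hu.
elim=> [|y q IH] x /=; first by rewrite addn0.
case/andP=> Hxy Hq; have := IH y Hq; have := Hl _ _ Hxy; lia.
Qed.

Lemma good_dist u g : good u g -> forall v, dist e u v = g v.
Proof.
move=> Hg v; apply/eqP; rewrite eqn_leq; apply/andP; split.
  exact: dist_le (good_walk Hg v).
exact: good_lower Hg _ _ (dist_walk (good_walk Hg v)).
Qed.

Lemma dist_lip u x y : (exists k, walk_of_len e k u x) -> e x y ->
  dist e u y <= dist e u x + 1.
Proof.
move=> [k Hk] Hxy.
apply: dist_le; have /walkP[p [Hs Hp Hl]] := dist_walk Hk.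
apply/walkP; exists (rcons p y); rewrite size_rcons Hs addn1 rcons_path Hp Hl Hxy last_rcons.
by split.
Qed.

Lemma dist_good u : (forall v, exists k, walk_of_len e k u v) -> good u (dist e u).
Proof.
move=> Hc; split.
- move=> v; apply/idP/idP => [/eqP H0|/eqP->].
    have [k Hk] := Hc v; have := dist_walk Hk; rewrite H0.
    by case/walkP=> p [/size0nil -> _ /= ->].
  have : dist e u u <= 0 by apply: dist_le; apply/walkP; exists [::].
  by rewrite leqn0.
- by move=> x y Hxy; apply: dist_lip.
- move=> v Hv; have [k Hk] := Hc v.
  have /walkP[p [Hs Hp Hl]] := dist_walk Hk.
  case/lastP: p Hs Hp Hl => [|p w]; first by move=> Hs; rewrite -Hs in Hv.
  rewrite size_rcons rcons_path last_rcons => Hs /andP[Hp Hw] Hl.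
  exists (last u p); first by rewrite -Hl.
  have H1 : dist e u (last u p) <= size p by apply: dist_le; apply/walkP; exists p.
  have H2 : dist e u v <= dist e u (last u p) + 1.
    by apply: dist_lip; [exists (size p); apply/walkP; exists p| rewrite -Hl].
  lia.
Qed.

End Gen.

Section GenSym.
Variables (V : finType) (e : rel V).
Hypothesis esym : symmetric e.

Lemma walk_rev k u v : walk_of_len e k u v -> walk_of_len e k v u.
Proof.
case/walkP=> p [Hs Hp Hl]; apply/walkP.
exists (rev (belast u p)); rewrite size_rev size_belast; split => //.
  rewrite -Hl rev_path; apply: sub_path Hp => x y; by rewrite esym.
case/lastP: p Hs Hp Hl => [|q w] _ _ Hl' /=; first by rewrite -Hl'.
by rewrite belast_rcons rev_cons last_rcons.
Qed.

Lemma walk_cat k1 k2 a b c : walk_of_len e k1 a b -> walk_of_len e k2 b c ->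
  walk_of_len e (k1 + k2) a c.
Proof.
case/walkP=> p [Hs Hp Hl] /walkP[q [Hqs Hq Hql]]; apply/walkP.
exists (p ++ q); rewrite size_cat Hs Hqs cat_path last_cat Hp Hl Hq; by split.
Qed.

Hypothesis conn : forall u v : V, exists k, walk_of_len e k u v.

Lemma dist_sym u v : dist e u v = dist e v u.
Proof.
have [k Hk] := conn u v; have [k' Hk'] := conn v u.
apply/eqP; rewrite eqn_leq; apply/andP; split; apply: dist_le; apply: walk_rev.
  exact: (dist_walk Hk').
exact: (dist_walk Hk).
Qed.

Lemma dist_tri a b c : dist e a c <= dist e a b + dist e b c.
Proof.
have [k Hk] := conn a b; have [k' Hk'] := conn b c.
apply: dist_le; apply: walk_cat; [exact: (dist_walk Hk)|exact: (dist_walk Hk')].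
Qed.

End GenSym.

Section GenLocal.
Variables (V : finType) (e : rel V).

Lemma pendant_good a l g : good e a g -> (forall z, e l z = (z == a)) ->
  (forall z, e z l = (z == a)) -> l != a ->
  good e l (fun z => if z == l then 0 else (g z).+1).
Proof.
case=> H0 Hl Hp Hlz Hzl Hla; split.
- by move=> v; case: (v =P l).
- move=> x y Hxy; case: (y =P l) => // /eqP Hyl.
  case: (x =P l) => [Hx|/eqP Hxl].
    by move: Hxy; rewrite Hx Hlz => /eqP ->; have /eqP -> : g a == 0 by rewrite H0.
  by have := Hl _ _ Hxy; lia.
- move=> v; case: (v =P l) => // /eqP Hvl _.
  case: (v =P a) => [->|/eqP Hva].
    exists l; first by rewrite Hlz.
    by rewrite eqxx; have /eqP -> : g a == 0 by rewrite H0.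
  have Hgv : 0 < g v by rewrite lt0n H0.
  have [w Hw Hgw] := Hp v Hgv.
  have Hwl : w != l by apply: contraNneq Hva => Hwl; move: Hw; rewrite Hwl Hlz.
  by exists w => //; rewrite (negbTE Hwl); lia.
Qed.

Lemma deg2_good t t' ox oy gx gy : good e ox gx -> good e oy gy ->
  (forall z, e t z = (z == ox) || (z == t')) ->
  (forall z, e z t = (z == ox) || (z == t')) ->
  (forall z, e t' z = (z == oy) || (z == t)) ->
  (forall z, e z t' = (z == oy) || (z == t)) ->
  t != t' -> t' != ox -> t != oy -> ox != oy -> t != ox -> t' != oy ->
  good e t (fun z => if z == t then 0 else if z == t' then 1
                     else minn (gx z).+1 (gy z).+2).
Proof.
case=> Hx0 Hxl Hxp [Hy0 Hyl Hyp] Ht1 Ht2 Ht3 Ht4 Htt Ht'x Hty Hxy Htox Ht'oy.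
have gxox : gx ox = 0 by apply/eqP; rewrite Hx0.
have gyoy : gy oy = 0 by apply/eqP; rewrite Hy0.
pose g := (fun z => if z == t then 0 else if z == t' then 1
                     else minn (gx z).+1 (gy z).+2).
change (good e t g).
have gt : g t = 0 by rewrite /g eqxx.
have gt' : g t' = 1 by rewrite /g eqxx eq_sym (negbTE Htt).
have gz : forall z, z != t -> z != t' -> g z = minn (gx z).+1 (gy z).+2.
  by move=> z Hz1 Hz2; rewrite /g (negbTE Hz1) (negbTE Hz2).
have gox : g ox = 1.
  rewrite gz; [by rewrite gxox; lia| by rewrite eq_sym| by rewrite eq_sym].
have goy : g oy = 2.
  rewrite gz; [|by rewrite eq_sym| by rewrite eq_sym].
  rewrite gyoy; have : gx oy != 0 by rewrite Hx0 eq_sym.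
  lia.
have Lip : forall x y, e x y -> g y <= g x + 1.
  move=> x y Hxy'.
  case: (y =P t) => [->|/eqP Hyt]; first by rewrite gt.
  case: (y =P t') => [->|/eqP Hyt']; first by rewrite gt' addn1.
  case: (x =P t) => [Hxt|/eqP Hxt].
    move: Hxy'; rewrite Hxt Ht1 (negbTE Hyt') orbF => /eqP ->.
    by rewrite gox gt.
  case: (x =P t') => [Hxt'|/eqP Hxt'].
    move: Hxy'; rewrite Hxt' Ht3 (negbTE Hyt) orbF => /eqP ->.
    by rewrite goy gt'.
  rewrite !gz //.
  have := Hxl _ _ Hxy'; have := Hyl _ _ Hxy'; lia.
split => //.
- move=> v; case: (v =P t) => [->|/eqP Hvt]; first by rewrite gt !eqxx.
  case: (v =P t') => [->|/eqP Hvt']; first by rewrite gt'.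
  by rewrite gz //; apply/negbTE; lia.
- move=> v; case: (v =P t) => [->|/eqP Hvt]; first by rewrite gt.
  move=> _.
  case: (v =P t') => [->|/eqP Hvt'].
    by exists t; rewrite ?gt ?gt' // Ht1 eqxx orbT.
  rewrite gz //.
  case: (leqP (gx v).+1 (gy v).+2) => Hcase.
    case: (v =P ox) => [Hv|/eqP Hvox].
      exists t; first by rewrite Ht1 Hv eqxx.
      by rewrite gt Hv gxox; lia.
    have Hgv : 0 < gx v by rewrite lt0n Hx0.
    have [w Hw Hgw] := Hxp v Hgv.
    case: (w =P t) => [Hwt|/eqP Hwt].
      by move: Hw; rewrite Hwt Ht1 (negbTE Hvox) (negbTE Hvt').
    case: (w =P t') => [Hwt'|/eqP Hwt'].
      move: Hw; rewrite Hwt' Ht3 (negbTE Hvt) orbF => /eqP Hv.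
      exfalso; subst v w.
      have : gx t' != 0 by rewrite Hx0.
      lia.
    exists w => //.
    have := Lip _ _ Hw; rewrite (gz v) // (gz w) //.
    lia.
  case: (v =P oy) => [Hv|/eqP Hvoy].
    exists t'; first by rewrite Ht3 Hv eqxx.
    by rewrite gt' Hv gyoy; lia.
  have Hgv : 0 < gy v by rewrite lt0n Hy0.
  have [w Hw Hgw] := Hyp v Hgv.
  case: (w =P t) => [Hwt|/eqP Hwt].
    move: Hw; rewrite Hwt Ht1 (negbTE Hvt') orbF => /eqP Hv.
    by subst v; move: Hcase; rewrite gxox.
  case: (w =P t') => [Hwt'|/eqP Hwt'].
    by move: Hw; rewrite Hwt' Ht3 (negbTE Hvoy) (negbTE Hvt).
  exists w => //.
  have := Lip _ _ Hw; rewrite (gz v) // (gz w) //.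
  lia.
Qed.

End GenLocal.


Section Tree.
Variables (T : finType) (e : rel T).
Hypothesis Ht : is_tree e.

Lemma t_sym : symmetric e. Proof. by case: Ht => [[]]. Qed.
Lemma t_irr : irreflexive e. Proof. by case: Ht => [[]]. Qed.
Lemma t_conn u v : exists k, walk_of_len e k u v.
Proof.
case: Ht => _ Hc _; have /connectP[p Hp Hl] := Hc u v.
by exists (size p); apply/walkP; exists p.
Qed.
Lemma t_acyc : acyclic e. Proof. by case: Ht. Qed.

Local Notation d := (dist e).

Lemma dgood u : good e u (d u). Proof. apply: dist_good => v; exact: t_conn. Qed.
Lemma d0 u v : (d u v == 0) = (v == u). Proof. by case: (dgood u). Qed.
Lemma duu u : d u u = 0. Proof. by apply/eqP; rewrite d0. Qed.
Lemma dlip u x y : e x y -> d u y <= d u x + 1. Proof. by case: (dgood u) => _ H _; apply: H. Qed.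
Lemma dsym u v : d u v = d v u. Proof. exact: (dist_sym t_sym t_conn). Qed.
Lemma dtri a b c : d a c <= d a b + d b c. Proof. exact: (dist_tri t_conn). Qed.
Lemma dlip2 u x y : e x y -> d u x <= d u y + 1.
Proof. by move=> H; apply: dlip; rewrite t_sym. Qed.

Definition par u v := odflt v [pick w | e w v && (d u w + 1 == d u v)].

Lemma parP u v : v != u -> e (par u v) v /\ d u (par u v) + 1 = d u v.
Proof.
move=> Hv; rewrite /par; case: pickP => [w /andP[H1 /eqP H2]|H] //.
exfalso; have [_ _ Hp] := dgood u.
have : 0 < d u v by rewrite lt0n d0.
move/Hp => [w Hw Hgw]; by move: (H w); rewrite Hw Hgw eqxx.
Qed.

Lemma d_par u v : d u (par u v) = d u v - 1.
Proof.
case: (v =P u) => [->|/eqP Hv]; last by have [_ H] := parP Hv; lia.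
rewrite /par; case: pickP => [w /andP[_ /eqP]|_] /=; rewrite duu; lia.
Qed.

Lemma d_iter u i a : d u (iter i (par u) a) = d u a - i.
Proof. elim: i => [|i IH]; first by rewrite subn0. rewrite iterS d_par IH; lia. Qed.

Lemma path_down u n x : n <= d u x -> path e x (traject (par u) (par u x) n).
Proof.
elim: n x => [|n IH] x Hn //=.
have Hx : x != u by rewrite -d0; lia.
have [H1 H2] := parP Hx.
rewrite t_sym H1 /=; apply: IH; rewrite d_par; lia.
Qed.

Lemma mem_traject_d u x n y : y \in traject (par u) x n -> exists2 i, i < n & d u y = d u x - i /\ y = iter i (par u) x.
Proof. case/trajectP => i Hi ->; exists i => //; by rewrite d_iter. Qed.

Lemma uniq_traject u n x : n <= (d u x).+1 -> uniq (traject (par u) x n).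
Proof.
elim: n x => [|n IH] x Hn //.
rewrite trajectS /= IH ?andbT; last by rewrite d_par; lia.
apply/negP => /mem_traject_d [i Hi [Hd _]].
move: Hd; rewrite d_par; lia.
Qed.

Lemma no_cyc u a b c : a != b -> d u a = d u b -> path e a (rcons c b) -> uniq c ->
  (forall x, x \in c -> d u a < d u x) -> False.
Proof.
move=> Hab Hlev Hp Hc Hcl.
set L := d u a.
have HL : iter L (par u) a == iter L (par u) b.
  apply/eqP.
  have Ha : iter L (par u) a = u by apply/eqP; rewrite -d0 d_iter subnn.
  have Hb : iter L (par u) b = u by apply/eqP; rewrite -d0 d_iter -Hlev subnn.
  by rewrite Ha Hb.
have HP : exists i, iter i (par u) a == iter i (par u) b by exists L.
case: (ex_minnP HP) => j /eqP Hj Hmin.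
have Hj1 : 0 < j by case: j Hj {Hmin} => // /= Hab'; rewrite Hab' eqxx in Hab.
have HjL : j <= L by apply: Hmin.
set m := iter j (par u) a.
set TA := traject (par u) a j.
set TB := traject (par u) b j.
have [j' Hj'] : exists j', j = j'.+1 by exists j.-1; lia.
have Hcyc : cycle e (m :: (rev TA ++ (c ++ TB))).
  rewrite /= rcons_cat rcons_cat cat_path.
  have HTA : TA = belast a (traject (par u) (par u a) j).
    have := lastI a (traject (par u) (par u a) j).
    rewrite -trajectS trajectSr last_traject => /rcons_inj [] //.
  have Hm : m = last a (traject (par u) (par u a) j) by rewrite last_traject.
  apply/andP; split.
    rewrite HTA Hm rev_path; apply: sub_path (path_down _) => [x y|]; first by rewrite t_sym.
    by [].
  have -> : last m (rev TA) = a by rewrite /TA Hj' trajectS rev_cons last_rcons.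
  have [Hpc Hlc] : path e a c /\ e (last a c) b by apply/andP; rewrite -rcons_path.
  have -> : rcons TB m = traject (par u) b j.+1 by rewrite trajectSr /m Hj.
  rewrite cat_path Hpc trajectS /= Hlc /=; apply: path_down; lia.
have mem_lev : forall x, x \in TA -> exists2 i, i < j & d u x = L - i /\ x = iter i (par u) a.
  by move=> x /mem_traject_d.
have mem_levB : forall x, x \in TB -> exists2 i, i < j & d u x = L - i /\ x = iter i (par u) b.
  by move=> x /mem_traject_d; rewrite -Hlev.
have dm : d u m = L - j by rewrite d_iter.
have Huniq : uniq (m :: (rev TA ++ (c ++ TB))).
  rewrite /= !mem_cat mem_rev cat_uniq rev_uniq cat_uniq Hc /=.
  rewrite uniq_traject; last by lia.
  rewrite uniq_traject; last by rewrite -Hlev; lia.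
  rewrite /= andbT.
  apply/and3P; split.
  - apply/negP => /or3P [/mem_lev [i Hi [Hd _]]|/Hcl|/mem_levB [i Hi [Hd _]]]; lia.
  - apply/hasPn => x; rewrite mem_cat => /orP [/Hcl Hx|/mem_levB [i Hi [Hd Hx]]];
      apply/negP; rewrite mem_rev => /mem_lev [i' Hi' [Hd' Hx']]; first by lia.
    have Hii : i = i' by lia.
    subst i'; have := Hmin i; rewrite -Hx -Hx' eqxx => /(_ isT); lia.
  - apply/hasPn => x /mem_levB [i Hi [Hd _]]; apply/negP => /Hcl; lia.
have := t_acyc (p := m :: (rev TA ++ (c ++ TB))).
rewrite /ucycle Hcyc Huniq => /(_ isT).
rewrite /= !size_cat size_rev /TA /TB !size_traject; lia.
Qed.


Lemma uniq_low u v w1 w2 : e w1 v -> e w2 v -> d u w1 <= d u v -> d u w2 <= d u v -> w1 = w2.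
Proof.
move=> H1 H2 L1 L2; apply/eqP; apply/negP => /negP Hne.
have l1 := dlip u H1; have l2 := dlip u H2.
have Hw1v : w1 != v by apply: contraTneq H1 => ->; rewrite t_irr.
have Hw2v : w2 != v by apply: contraTneq H2 => ->; rewrite t_irr.
case: (d u w1 =P d u v) => [E1|N1].
  by apply: (@no_cyc u w1 v [::]) => //=; rewrite H1.
case: (d u w2 =P d u v) => [E2|N2].
  by apply: (@no_cyc u w2 v [::]) => //=; rewrite H2.
apply: (@no_cyc u w1 w2 [:: v]) => //=; first lia.
  by rewrite H1 t_sym H2.
by move=> x; rewrite inE => /eqP ->; lia.
Qed.

Lemma tf1 u x y : e x y -> (d u y = d u x + 1) \/ (d u x = d u y + 1).
Proof.
move=> Hxy; have l1 := dlip u Hxy; have l2 := dlip2 u Hxy.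
case: (d u x =P d u y) => [E|N]; last lia.
exfalso; apply: (@no_cyc u x y [::]) => //=; last by rewrite Hxy.
by apply: contraTneq Hxy => ->; rewrite t_irr.
Qed.

Lemma par_uniq u x y : e x y -> d u x + 1 = d u y -> x = par u y.
Proof.
move=> Hxy Hd; have Hy : y != u by rewrite -d0; lia.
have [H1 H2] := parP Hy.
apply: (uniq_low (u:=u) (v:=y)) => //; lia.
Qed.

Lemma sum_pred1 (F : T -> nat) (P : bool) (z : T) :
  \sum_x (if P && (x == z) then F x else 0) = if P then F z else 0.
Proof.
case: P => /=; last by rewrite big1.
rewrite (bigD1 z) //= eqxx big1 ?addn0 // => x /negbTE ->; done.
Qed.

Lemma orient_pt u (F : T -> T -> nat) x y : (if e x y then F x y else 0) =
   (if (y != u) && (x == par u y) then F x y else 0) +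
   (if (x != u) && (y == par u x) then F x y else 0).
Proof.
case: (boolP ((y != u) && (x == par u y))) => [/andP[Hy /eqP Hx]|HA].
  have [H1 H2] := parP Hy.
  have -> : e x y by rewrite Hx.
  case: (boolP ((x != u) && (y == par u x))) => [/andP[Hx' /eqP Hy']|_]; last by rewrite addn0.
  have [_ H3] := parP Hx'; rewrite -Hy' -Hx in H3 H2; lia.
case: (boolP ((x != u) && (y == par u x))) => [/andP[Hx' /eqP Hy']|HB].
  have [H1 H2] := parP Hx'.
  by have -> : e x y by rewrite Hy' t_sym.
case: ifP => // Hxy; exfalso.
case: (tf1 u Hxy) => Hd.
  have Hy : y != u by rewrite -d0; lia.
  by move: HA; rewrite Hy (par_uniq (u:=u) Hxy) ?eqxx.
have Hx : x != u by rewrite -d0; lia.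
by move: HB; rewrite Hx (par_uniq (u:=u) (x:=y) (y:=x)) ?eqxx // t_sym.
Qed.

Lemma sum_orient u (F : T -> T -> nat) :
  \sum_x \sum_(y | e x y) F x y =
  \sum_(y | y != u) F (par u y) y + \sum_(x | x != u) F x (par u x).
Proof.
rewrite (eq_bigr (fun x => \sum_y ((if (y != u) && (x == par u y) then F x y else 0) +
   (if (x != u) && (y == par u x) then F x y else 0)))); last first.
  by move=> x _; rewrite big_mkcond; apply: eq_bigr => y _; rewrite (orient_pt u).
rewrite (eq_bigr (fun x => \sum_y (if (y != u) && (x == par u y) then F x y else 0) +
   \sum_y (if (x != u) && (y == par u x) then F x y else 0))); last by move=> x _; rewrite big_split.
rewrite big_split /= exchange_big /=.
congr (_ + _); rewrite [RHS]big_mkcond; apply: eq_bigr => y _.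
  by rewrite sum_pred1.
by rewrite (sum_pred1 (F y)).
Qed.


Definition side a b w := d w b < d w a.

Lemma dadj a b : e a b -> d a b = 1.
Proof.
move=> Hab; have := dlip a Hab; rewrite duu.
have : d a b != 0 by rewrite d0; apply: contraTneq Hab => ->; rewrite t_irr.
lia.
Qed.

Lemma side_rec a b w : e a b -> w != a -> side a b w = (w == b) || side a b (par a w).
Proof.
move=> Hab Hw; rewrite /side.
have [Hq1 Hq2] := parP Hw.
have dab := dadj Hab.
have L1 := dlip w Hab; have L2 := dlip2 w Hab.
apply/idP/idP.
  move=> Hs; case: (w =P b) => [->|/eqP Hwb] //=.
  have [Hr1 Hr2] := parP Hwb.
  have Htri := dtri a b (par b w).
  have Hra : d a (par b w) <= d a w by move: Hs; rewrite (dsym w b) (dsym w a); lia.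
  have Hrq : par b w = par a w.
    by apply: (uniq_low (u:=a) (v:=w)) => //; lia.
  move: Hs Hr2 Hq2; rewrite (dsym w b) (dsym w a) (dsym (par a w) b) (dsym (par a w) a) Hrq; lia.
case/orP => [/eqP ->|Hs].
  by rewrite duu dsym dab.
have := dlip b Hq1; move: Hs; rewrite (dsym (par a w) a) (dsym w b) (dsym w a) (dsym (par a w) b).
lia.
Qed.

Lemma same_side_or a b x y : e a b -> e x y -> d a y = d a x + 1 -> (x, y) != (a, b) ->
  side a b x = side a b y.
Proof.
move=> Hab Hxy Hd Hne.
have Hx := par_uniq Hxy (esym Hd).
have Hy : y != a by rewrite -d0; lia.
rewrite (side_rec Hab Hy) -Hx.
case: (y =P b) => [Hyb|_] //.
exfalso; move: Hne; rewrite Hyb.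
have Ha : a = par a b by apply: par_uniq => //; rewrite duu dadj.
by rewrite Hx Hyb -Ha eqxx.
Qed.

Lemma same_side a b x y : e a b -> e x y -> (x, y) != (a, b) -> (x, y) != (b, a) ->
  side a b x = side a b y.
Proof.
move=> Hab Hxy H1 H2.
case: (tf1 a Hxy) => Hd; first exact: same_side_or.
symmetry; apply: same_side_or => //; first by rewrite t_sym.
by move: H2; rewrite !xpair_eqE andbC.
Qed.

End Tree.


Section Vic.
Variables (s : nat) (T : finType) (e : rel T).
Hypothesis Ht : is_tree e.

Local Notation V' := (vicsek_vertex e s).
Local Notation E' := (vicsek_rel e s).
Local Notation d := (dist e).
Local Notation d' := (dist E').

Definition gO (u : T) (z : V') : nat :=
  match z with
  | inl v => 3 * d u v
  | inr (inl p) => minn (3 * d u (val p).1 + 1) (3 * d u (val p).2 + 2)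
  | inr (inr q) => 3 * d u (val q).1 + 1
  end.

Definition sv x y (H : e x y) : V' := inr (inl (exist (fun p : T * T => e p.1 p.2) (x, y) H)).

Lemma gO_good u : good E' (inl u) (gO u).
Proof.
split.
- case => [v|[p|q]] /=; first by rewrite muln_eq0 /= (d0 Ht).
    by apply/negbTE; lia.
  by apply/negbTE; lia.
- move=> [v|[[[x y] Hxy]|[[a i] Hai]]] [v'|[[[x' y'] Hxy']|[[a' i'] Hai']]] //=.
  + by move/eqP <-; lia.
  + by move/eqP <-; lia.
  + move/eqP ->; have /= := dlip2 Ht u Hxy; lia.
  + case/eqP => -> ->; lia.
  + by move/eqP ->; lia.
- move=> [v|[[[x y] Hxy]|[[a i] Hai]]] /= Hv.
  + have Hvu : v != u by rewrite -(d0 Ht); lia.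
    have [H1 H2] := parP Ht Hvu.
    have H1' : e v (par e u v) by rewrite (t_sym Ht).
    exists (sv H1'); rewrite /= ?eqxx //; lia.
  + case: (leqP (d u x) (d u y)) => Hc.
      by exists (inl x); rewrite /= ?eqxx //; lia.
    have Hyx : e y x by rewrite (t_sym Ht).
    exists (sv Hyx); rewrite /= ?eqxx //.
    have /= := dlip Ht u Hxy; lia.
  + by exists (inl a); rewrite /= ?eqxx //.
Qed.

Lemma dO u z : d' (inl u) z = gO u z.
Proof. exact: good_dist (gO_good u) z. Qed.

Lemma dL (q : {q : T * 'I_s | deg e q.1 <= q.2}) z :
  d' (inr (inr q)) z = if z == inr (inr q) then 0 else (gO (val q).1 z).+1.
Proof.
rewrite (good_dist (pendant_good (a := inl (val q).1) (l := inr (inr q)) (gO_good _) _ _ _) z) //.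
by case => [v|[p|q']].
Qed.

Lemma dS x y (H : e x y) (H' : e y x) z : z != sv H -> z != sv H' ->
  d' (sv H) z = minn (gO x z).+1 (gO y z).+2.
Proof.
move=> Hz1 Hz2.
have Hxy : x != y by apply/eqP => Exy; have := H; rewrite Exy (t_irr Ht).
rewrite (good_dist (deg2_good (t' := sv H') (gO_good x) (gO_good y) _ _ _ _ _ _ _ _ _ _) z).
- by rewrite (negbTE Hz1) (negbTE Hz2).
- by case => [v|[[[a b] Hab]|q']] /=; rewrite ?orbF ?xpair_eqE // andbC.
- by case => [v|[[[a b] Hab]|q']] /=; rewrite ?orbF ?xpair_eqE // andbC.
- by case => [v|[[[a b] Hab]|q']] /=; rewrite ?orbF ?xpair_eqE // andbC.
- by case => [v|[[[a b] Hab]|q']] /=; rewrite ?orbF ?xpair_eqE // andbC.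
- by change (~~ ((x, y) == (y, x))); rewrite xpair_eqE negb_and Hxy.
- done.
- done.
- by rewrite /=.
- done.
- done.
Qed.

End Vic.


Lemma sum_sig (X : finType) (P : pred X) (F : X -> nat) :
  \sum_(q : {x | P x}) F (val q) = \sum_(x | P x) F x.
Proof.
symmetry.
rewrite (reindex_omap (val : {x | P x} -> X) insub); last by move=> x Px; rewrite insubT.
by apply: eq_bigl => -[x Px] /=; rewrite Px insubT /= eqxx.
Qed.

Lemma sum_constT (X : finType) (c : nat) : \sum_(x : X) c = #|X| * c.
Proof. by rewrite sum_nat_const. Qed.

Lemma sum_const_cond (X : finType) (P : pred X) (c : nat) :
  \sum_(x | P x) c = (\sum_(x | P x) 1) * c.
Proof. by rewrite big_distrl /=; apply: eq_bigr => x _; rewrite mul1n. Qed.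

Lemma dist_self (V : finType) (r : rel V) u : dist r u u = 0.
Proof. apply/eqP; rewrite -leqn0; apply: dist_le; apply/walkP; by exists [::]. Qed.

Lemma dist_adj (V : finType) (r : rel V) u v : r u v -> u != v -> dist r u v = 1.
Proof.
move=> Huv Hne.
have Hw : walk_of_len r 1 u v by apply/walkP; exists [:: v]; rewrite /= Huv.
have := dist_le Hw; have := dist_walk Hw.
case: (dist r u v) => [|[|k]] //.
by case/walkP => p [/size0nil -> _ /= Hu]; rewrite Hu eqxx in Hne.
Qed.

Lemma count_ge (s k : nat) : \sum_(i < s | k <= i) 1 = s - k.
Proof.
have := @big_geq_mkord nat 0 addn k s xpredT (fun _ => 1).
rewrite sum_nat_const_nat muln1 => <-.
done.
Qed.

Section Vic2.
Variables (s : nat) (T : finType) (e : rel T).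
Hypothesis Ht : is_tree e.
Hypothesis Hdeg : forall v, deg e v <= s.

Local Notation V' := (vicsek_vertex e s).
Local Notation E' := (vicsek_rel e s).
Local Notation d := (dist e).
Local Notation d' := (dist E').
Local Notation Esub := {p : T * T | e p.1 p.2}.
Local Notation Lsub := {q : T * 'I_s | deg e q.1 <= q.2}.

Definition sig u := \sum_v d u v.
Definition sig' (z : V') := \sum_w d' z w.

Lemma sum_V (F : V' -> nat) : \sum_z F z =
  \sum_u F (inl u) + \sum_(p : Esub) F (inr (inl p)) + \sum_(q : Lsub) F (inr (inr q)).
Proof. by rewrite big_sumType /= big_sumType addnA. Qed.

Lemma sum_Esub (G : T -> T -> nat) :
  \sum_(p : Esub) G (val p).1 (val p).2 = \sum_x \sum_(y | e x y) G x y.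
Proof.
rewrite (sum_sig (fun p : T * T => e p.1 p.2) (fun p => G p.1 p.2)).
by rewrite pair_big_dep.
Qed.

Lemma deg_sum a : deg e a = \sum_(b | e a b) 1.
Proof. by rewrite /deg -sum1_card; apply: eq_bigl => b; rewrite !inE. Qed.

Lemma sum_Lsub (G : T -> nat) :
  \sum_(q : Lsub) G (val q).1 = \sum_a (s - deg e a) * G a.
Proof.
rewrite (sum_sig (fun q : T * 'I_s => deg e q.1 <= q.2) (fun q => G q.1)).
rewrite -(pair_big_dep xpredT (fun a (i : 'I_s) => deg e a <= i) (fun a _ => G a)).
apply: eq_bigr => a _; rewrite sum_const_cond; congr (_ * _).
exact: count_ge.
Qed.

Lemma sum_deg (G : T -> nat) : \sum_x \sum_(y | e x y) G x = \sum_x deg e x * G x.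
Proof. by apply: eq_bigr => x _; rewrite sum_const_cond deg_sum. Qed.

Lemma sum_neq u (G : T -> nat) : G u = 0 -> \sum_(y | y != u) G y = \sum_y G y.
Proof. by move=> H; rewrite [RHS](bigD1 u) //= H. Qed.

Lemma cnt (u : T) : \sum_(y | y != u) 1 + 1 = #|T|.
Proof. by rewrite -[#|T|]muln1 -sum_constT [RHS](bigD1 u) //= addnC. Qed.


Lemma sum_shift (u : T) (F G : T -> nat) k : (forall y, y != u -> F y + k = G y) ->
  \sum_(y | y != u) F y + k * \sum_(y | y != u) 1 = \sum_(y | y != u) G y.
Proof.
move=> H; rewrite mulnC -sum_const_cond -big_split /=.
by apply: eq_bigr => y Hy; apply: H.
Qed.

Lemma sum3 u : \sum_(y | y != u) 3 * d u y = 3 * sig u.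
Proof. rewrite -big_distrr /= sum_neq //; exact: dist_self. Qed.

Lemma sigO u : sig' (inl u) + 2 * #|T| = 3 * (s + 1) * sig u + s * #|T| + 2.
Proof.
have Hc := cnt u; set c := \sum_(y | y != u) 1 in Hc.
rewrite /sig' (eq_bigr _ (fun z _ => dO Ht u z)) sum_V /=.
rewrite (sum_Esub (fun x y => minn (3 * d u x + 1) (3 * d u y + 2))).
rewrite (sum_Lsub (fun a => 3 * d u a + 1)).
rewrite (sum_orient Ht u).
have F1 : \sum_v 3 * d u v = 3 * sig u by rewrite -big_distrr.
have F2 : \sum_(y | y != u) minn (3 * d u (par e u y) + 1) (3 * d u y + 2) + 2 * c = 3 * sig u.
  rewrite -sum3; apply: sum_shift => y Hy; have [_ H] := parP Ht Hy; lia.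
have F3 : \sum_(y | y != u) minn (3 * d u y + 1) (3 * d u (par e u y) + 2) + 1 * c = 3 * sig u.
  rewrite -sum3; apply: sum_shift => y Hy; have [_ H] := parP Ht Hy; lia.
have F4 : \sum_a (s - deg e a) * (3 * d u a + 1) + \sum_a deg e a * (3 * d u a + 1)
    = s * (3 * sig u + #|T|).
  rewrite -big_split /= -[#|T|]muln1 -sum_constT -F1 -big_split big_distrr /=.
  apply: eq_bigr => a _; rewrite -mulnDl subnK //.
have F5 : \sum_a deg e a * (3 * d u a + 1) =
   \sum_(y | y != u) (3 * d u (par e u y) + 1) + \sum_(x | x != u) (3 * d u x + 1).
  by rewrite -sum_deg (sum_orient Ht u).
have F6 : \sum_(y | y != u) (3 * d u (par e u y) + 1) + 2 * c = 3 * sig u.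
  rewrite -sum3; apply: sum_shift => y Hy; have [_ H] := parP Ht Hy; lia.
have F7 : \sum_(x | x != u) (3 * d u x + 1) = 3 * sig u + c.
  by rewrite big_split /= sum3 sum_const_cond muln1.
clearbody c.
move: F1 F2 F3 F4 F5 F6 F7 Hc.
move: (\sum_v 3 * d u v) => S1.
move: (\sum_(y | y != u) minn (3 * d u (par e u y) + 1) (3 * d u y + 2)) => S2.
move: (\sum_(y | y != u) minn (3 * d u y + 1) (3 * d u (par e u y) + 2)) => S3.
move: (\sum_a (s - deg e a) * (3 * d u a + 1)) => S4.
move: (\sum_a deg e a * (3 * d u a + 1)) => S5.
move: (\sum_(y | y != u) (3 * d u (par e u y) + 1)) => S6.
move: (\sum_(x | x != u) (3 * d u x + 1)) => S7.
move: (sig u) (#|T|) => sg n.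
lia.
Qed.


Lemma sum_eq1 (V : finType) (t : V) : \sum_(z : V) (z == t : nat) = 1.
Proof. by rewrite (bigD1 t) //= eqxx big1 // => z /negbTE ->. Qed.

Lemma sum_eq2 (V : finType) (t : V) : \sum_(z : V) 2 * (z == t : nat) = 2.
Proof. by rewrite (bigD1 t) //= eqxx big1 // => z /negbTE ->. Qed.

Lemma diff3 x y (H : e x y) (H' : e y x) z : z != sv s H -> z != sv s H' ->
  gO x z = gO y z + 3 \/ gO y z = gO x z + 3.
Proof.
case: z => [w|[[[a b] Hab]|[[a i] Hai]]] /= Hz1 Hz2.
- have := tf1 Ht w H; rewrite (dsym Ht x w) (dsym Ht y w); lia.
- change (is_true (~~ ((a, b) == (x, y)))) in Hz1.
  change (is_true (~~ ((a, b) == (y, x)))) in Hz2.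
  have N1 : (x, y) != (a, b) by rewrite eq_sym.
  have N2 : (x, y) != (b, a).
    by apply: contra Hz2; rewrite !xpair_eqE => /andP[/eqP -> /eqP ->]; rewrite !eqxx.
  have Hs := same_side Ht Hab H N1 N2; rewrite /side in Hs.
  have := tf1 Ht x Hab; have := tf1 Ht y Hab; have := tf1 Ht a H; have := tf1 Ht b H.
  rewrite (dsym Ht a x) (dsym Ht a y) (dsym Ht b x) (dsym Ht b y).
  simpl in *.
  case: (boolP (d x b < d x a)) => Hx.
    rewrite Hx in Hs; move/esym: Hs => Hy; lia.
  rewrite (negbTE Hx) in Hs; move/esym/negbT: Hs => Hy; rewrite -leqNgt in Hx Hy; lia.
- have := tf1 Ht a H; rewrite (dsym Ht x a) (dsym Ht y a); lia.
Qed.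

Lemma sv_neq x y (H : e x y) (H' : e y x) : sv s H != sv s H'.
Proof.
have Hxy : x != y by apply/eqP => Exy; have := H; rewrite Exy (t_irr Ht).
by change (~~ ((x, y) == (y, x))); rewrite xpair_eqE negb_and Hxy.
Qed.

Lemma sv_adj x y (H : e x y) (H' : e y x) : E' (sv s H) (sv s H').
Proof. by change ((y, x) == (y, x)); rewrite eqxx. Qed.

Lemma pair_pt x y (H : e x y) (H' : e y x) z :
  d' (sv s H) z + d' (sv s H') z + 2 * (z == sv s H) + 2 * (z == sv s H') = gO x z + gO y z.
Proof.
have dxy := dadj Ht H; have dyx := dadj Ht H'.
case: (z =P sv s H) => [->|/eqP N1].
  rewrite dist_self (dist_adj (sv_adj H' H) (sv_neq H' H)) (negbTE (sv_neq H H')).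
  by rewrite /= !dist_self dxy dyx.
case: (z =P sv s H') => [->|/eqP N2].
  rewrite dist_self (dist_adj (sv_adj H H') (sv_neq H H')).
  by rewrite /= !dist_self dxy dyx.
rewrite (dS Ht N1 N2) (dS Ht N2 N1).
case: (diff3 N1 N2); lia.
Qed.

Lemma sigS x y (H : e x y) (H' : e y x) :
  sig' (sv s H) + sig' (sv s H') + 4 = sig' (inl x) + sig' (inl y).
Proof.
have E : \sum_(z : V') (d' (sv s H) z + d' (sv s H') z + 2 * (z == sv s H) + 2 * (z == sv s H'))
    = \sum_(z : V') (gO x z + gO y z) := eq_bigr _ (fun z _ => pair_pt H H' z).
rewrite big_split big_split big_split /= !sum_eq2 big_split /= in E.
rewrite /sig' (eq_bigr _ (fun z _ => dO Ht x z)) (eq_bigr _ (fun z _ => dO Ht y z)) -E.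
by rewrite -[RHS]addnA.
Qed.

Lemma sigL (q : Lsub) : sig' (inr (inr q)) + 2 = #|V'| + sig' (inl (val q).1).
Proof.
have pt : forall z, d' (inr (inr q)) z + 2 * (z == inr (inr q)) = 1 + gO (val q).1 z.
  move=> z; rewrite dL //; case: (z =P inr (inr q)) => [->|_] /=; last by rewrite addn0 add1n.
  by rewrite dist_self.
rewrite /sig' (eq_bigr _ (fun z _ => dO Ht (val q).1 z)).
rewrite -[#|V'|]muln1 -sum_constT -big_split -(eq_bigr _ (fun z _ => pt z)) big_split /=.
by rewrite sum_eq2.
Qed.


Lemma flipP (p : Esub) : e (val p).2 (val p).1.
Proof. by rewrite (t_sym Ht); exact: (valP p). Qed.

Definition flip (p : Esub) : Esub := exist (fun p : T * T => e p.1 p.2) ((val p).2, (val p).1) (flipP p).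

Lemma flipK : involutive flip.
Proof. by move=> [[x y] H]; apply: val_inj. Qed.

Lemma sum_flip (F : Esub -> nat) : \sum_p F (flip p) = \sum_p F p.
Proof. by rewrite [RHS](reindex_inj (inv_inj flipK)). Qed.

Lemma sumS : 2 * \sum_(p : Esub) sig' (inr (inl p)) + 4 * \sum_(p : Esub) 1 =
  2 * \sum_(p : Esub) sig' (inl (val p).1).
Proof.
have E : \sum_(p : Esub) (sig' (inr (inl p)) + sig' (inr (inl (flip p))) + 4) =
         \sum_(p : Esub) (sig' (inl (val p).1) + sig' (inl (val p).2)).
  apply: eq_bigr => -[[x y] H] _; exact: (sigS H (flipP (exist (fun p : T * T => e p.1 p.2) (x, y) H))).
rewrite big_split big_split /= big_split /= in E.
have F1 : \sum_(p : Esub) sig' (inr (inl (flip p))) = \sum_(p : Esub) sig' (inr (inl p))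
  := sum_flip (fun p => sig' (inr (inl p))).
have F2 : \sum_(p : Esub) sig' (inl (val p).2) = \sum_(p : Esub) sig' (inl (val p).1)
  := sum_flip (fun p => sig' (inl (val p).1)).
rewrite F1 F2 sum_const_cond in E.
set A := \sum_(p : Esub) sig' (inr (inl p)) in E *.
set B := \sum_(p : Esub) sig' (inl (val p).1) in E *.
set C := \sum_(p : Esub) 1 in E *.
lia.
Qed.


Lemma main_sum (u0 : T) : 2 <= s ->
  \sum_(z : V') sig' z = 3 * (s + 1) ^ 2 * (\sum_u sig u)
     + 2 * (s ^ 2 - s - 2) * #|T| ^ 2 + 2 * (s + 2) * #|T|.
Proof.
move=> Hs2.
have Hc := cnt u0.
have HO : \sum_u sig' (inl u) + #|T| * (2 * #|T|) =
          3 * (s + 1) * (\sum_u sig u) + #|T| * (s * #|T|) + #|T| * 2.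
  have E : \sum_u (sig' (inl u) + 2 * #|T|) = \sum_u (3 * (s + 1) * sig u + s * #|T| + 2)
    := eq_bigr _ (fun u _ => sigO u).
  rewrite !big_split /= !sum_constT -big_distrr /= in E.
  set A := \sum_u sig' (inl u) in E *; set B := \sum_u sig u in E *.
set n := #|T| in E *. lia.
have HEc : \sum_(p : Esub) 1 = \sum_(y | y != u0) 1 + \sum_(y | y != u0) 1.
  by rewrite (sum_Esub (fun _ _ => 1)) (sum_orient Ht u0 (fun _ _ => 1)).
have HLc : \sum_(q : Lsub) 1 + \sum_(p : Esub) 1 = #|T| * s.
  rewrite (sum_Lsub (fun _ => 1)) (sum_Esub (fun _ _ => 1)) (sum_deg (fun _ => 1)).
  rewrite -big_split -sum_constT; apply: eq_bigr => a _.
  change ((s - deg e a) * 1 + deg e a * 1 = s); rewrite !muln1 subnK //.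
have HN : #|V'| = #|T| + \sum_(p : Esub) 1 + \sum_(q : Lsub) 1.
  by rewrite -[#|V'|]muln1 -sum_constT sum_V sum_constT muln1.
have HS := sumS.
have HX : \sum_(p : Esub) sig' (inl (val p).1) = \sum_x deg e x * sig' (inl x).
  by rewrite (sum_Esub (fun x _ => sig' (inl x))) (sum_deg (fun x => sig' (inl x))).
have HL : \sum_(q : Lsub) sig' (inr (inr q)) + 2 * \sum_(q : Lsub) 1 =
          #|V'| * \sum_(q : Lsub) 1 + \sum_a (s - deg e a) * sig' (inl a).
  have E : \sum_(q : Lsub) (sig' (inr (inr q)) + 2) = \sum_(q : Lsub) (#|V'| + sig' (inl (val q).1))
    := eq_bigr _ (fun q _ => sigL q).
  rewrite !big_split /= in E.
  rewrite -(sum_Lsub (fun a => sig' (inl a))) mulnC -sum_const_cond [X in _ = X + _]mulnC -sum_const_cond.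
  exact: E.
have HYX : \sum_a (s - deg e a) * sig' (inl a) + \sum_x deg e x * sig' (inl x) =
           s * \sum_u sig' (inl u).
  rewrite -big_split big_distrr /=; apply: eq_bigr => a _; by rewrite -mulnDl subnK.
have HT : \sum_(z : V') sig' z = \sum_u sig' (inl u) + \sum_(p : Esub) sig' (inr (inl p))
          + \sum_(q : Lsub) sig' (inr (inr q)) := sum_V _.
move: HO HEc HLc HN HS HX HL HYX HT Hc.
move: (\sum_u sig' (inl u)) => SO.
move: (\sum_(y | y != u0) 1) => c.
move: (\sum_(p : Esub) 1) => Ec.
move: (\sum_(q : Lsub) 1) => Lc.
move: (\sum_(p : Esub) sig' (inr (inl p))) => SS.
move: (\sum_(q : Lsub) sig' (inr (inr q))) => SL.
move: (\sum_(p : Esub) sig' (inl (val p).1)) => X.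
move: (\sum_x deg e x * sig' (inl x)) => X'.
move: (\sum_a (s - deg e a) * sig' (inl a)) => Y.
move: (\sum_u sig u) => S.
move: (\sum_(z : V') sig' z) => Tt.
move: #|V'| => N'.
move: #|T| => n.
move=> HO HEc HLc HN HS HX HL HYX HT Hc.
have [s0 Es] : exists s0, s = s0 + 2 by exists (s - 2); lia.
subst s n Ec X'.
have ESO : SO = 3 * (s0 + 3) * S + s0 * (c + 1) * (c + 1) + 2 * (c + 1) by lia.
have ELc : Lc = s0 * (c + 1) + 2 by lia.
have EN : N' = (s0 + 3) * (c + 1) by lia.
subst SO Lc N'.
have Esub : (s0 + 2) ^ 2 - (s0 + 2) - 2 = s0 * (s0 + 3).
  rewrite !expnS expn0 muln1; nia.
rewrite Esub !expnS !expn0 !muln1.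
lia.
Qed.

End Vic2.


Lemma sum_even (T : finType) (e : rel T) : is_tree e ->
  exists W0, \sum_u \sum_v dist e u v = 2 * W0.
Proof.
move=> Ht.
pose r := fun u : T => (enum_rank u : nat).
exists (\sum_u \sum_v ((r u < r v) * dist e u v)).
have E1 : \sum_u \sum_v dist e u v =
   \sum_u \sum_v ((r u < r v) * dist e u v) + \sum_u \sum_v ((r v < r u) * dist e u v).
  rewrite -big_split; apply: eq_bigr => u _; rewrite -big_split; apply: eq_bigr => v _.
  rewrite /r; case: ltngtP => H /=; rewrite ?mul1n ?mul0n ?addn0 //.
  by move/ord_inj/enum_rank_inj: H => ->; rewrite dist_self.
have E2 : \sum_u \sum_v ((r v < r u) * dist e u v) = \sum_u \sum_v ((r u < r v) * dist e u v).
  rewrite exchange_big /=; apply: eq_bigr => u _; apply: eq_bigr => v _.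
  by rewrite (dsym Ht).
by rewrite E1 E2 addnn -mul2n.
Qed.

Unset Implicit Arguments.

Theorem theorem2 (s : nat) (T : finType) (e : rel T) :
  2 <= s -> is_tree e -> (forall v : T, deg e v <= s) ->
  wiener (vicsek_rel e s) =
    3 * (s + 1) ^ 2 * wiener e + (s ^ 2 - s - 2) * #|T| ^ 2 + (s + 2) * #|T|.
Proof.
move=> Hs Ht Hdeg; rewrite /wiener.
have [W0 HW] := sum_even Ht.
case: (pickP (fun _ : T => true)) => [u0 _|Hnone].
  have M : \sum_(z : vicsek_vertex e s) \sum_(w : vicsek_vertex e s) dist (vicsek_rel e s) z w =
     3 * (s + 1) ^ 2 * (\sum_u \sum_v dist e u v)
     + 2 * (s ^ 2 - s - 2) * #|T| ^ 2 + 2 * (s + 2) * #|T| := main_sum Ht Hdeg u0 Hs.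
  rewrite M HW.
  set A := (s ^ 2 - s - 2) * #|T| ^ 2; set B := (s + 2) * #|T|.
  have -> : 3 * (s + 1) ^ 2 * (2 * W0) + 2 * (s ^ 2 - s - 2) * #|T| ^ 2 + 2 * (s + 2) * #|T|
     = 2 * (3 * (s + 1) ^ 2 * W0 + A + B).
    by rewrite /A /B !mulnA !mulnDr; lia.
  by rewrite !mulKn.
have n0 : #|T| = 0 by apply: eq_card0 => x; have := Hnone x.
have HT : forall z : vicsek_vertex e s, False.
  by case => [u|[p|q]]; [have := Hnone u| have := Hnone (val p).1| have := Hnone (val q).1].
rewrite n0 !big1 //.
- by rewrite div0n muln0 (_ : 0 ^ 2 = 0) // !muln0.
- by move=> u; have := Hnone u.
Qed.
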